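(* Let $(X,d_X,\mu,T)$ and $(Y,d_Y,\nu,S)$ be compact metric measure-preserving systems with $T,S$ continuous and $\mu,\nu$ of full support, and let $\lambda,\lambda'\in\mathcal J(T,S)$. Let $U:(X\times Y,\lambda)\to(X\times Y,\lambda')$ be a kernel-preserving isomorphism between $\mathcal K_\lambda$ and $\mathcal K_{\lambda'}$. Then there are $A\in\mathrm{Aut}_{\rm md}(X,d_X,\mu,T)$ and $B\in\mathrm{Aut}_{\rm md}(Y,d_Y,\nu,S)$ such that $U(x,y)=(Ax,By)$ for $\lambda$-a.e. $(x,y)$. Consequently $\lambda'=(A\times B)_\#\lambda$.
   Context: A compact metric measure-preserving system $(X,d_X,\mu,T)$: $(X,d_X)$ compact metric, $\mu$ Borel probability, $T$ Borel with $T_\#\mu=\mu$; probability spaces are standard and completed, maps and equalities modulo null sets. $\mathcal J(T,S)$ is the set of Borel probability measures on $X\times Y$ with marginals $\mu,\nu$ invariant under $T\times S$. For $\lambda\in\mathcal J(T,S)$, $\mathcal K_\lambda$ is the marked colored kernel space on $(X\times Y,\lambda)$ with marks $M_X^{a,b}(x,y)=d_X(T^ax,T^bx)$, $M_Y^{a,b}(x,y)=d_Y(S^ay,S^by)$ and kernels $K_X^{a,b}((x,y),(x',y'))=d_X(T^ax,T^bx')$, $K_Y^{a,b}((x,y),(x',y'))=d_Y(S^ay,S^by')$ for $a,b\ge0$. A kernel-preserving isomorphism between $\mathcal K_\lambda$ and $\mathcal K_{\lambda'}$ is a measure-space isomorphism $U:(X\times Y,\lambda)\to(X\times Y,\lambda')$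 with $M(z)=M(Uz)$ $\lambda$-a.e. for every mark $M$ and $K(z,z')=K(Uz,Uz')$ $\lambda\otimes\lambda$-a.e. for every kernel $K$ in the list above. $\mathrm{Aut}_{\rm md}(X,d_X,\mu,T)$ is the group of measure-space automorphisms $A$ of $(X,\mu)$ with $A\circ T=T\circ A$ modulo $\mu$ and $d_X(Ax,Ax')=d_X(x,x')$ for $\mu\otimes\mu$-a.e. $(x,x')$; similarly for $Y$. *)

(* Defs.v *)
From HB Require Import structures.
From mathcomp Require Import all_boot all_order all_algebra.
From mathcomp Require Import all_classical all_reals all_analysis.
Set Implicit Arguments. Unset Strict Implicit. Unset Printing Implicit Defensive.
Import Order.TTheory GRing.Theory Num.Theory.
Local Open Scope classical_set_scope.
Local Open Scope ring_scope.

Section Defs.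
Context (R : realType).

Definition is_metric (X : Type) (dX : X -> X -> R) : Prop :=
  [/\ forall x y, dX x y = 0 <-> x = y,
      forall x y, dX x y = dX y x &
      forall x y z, dX x z <= dX x y + dX y z].

Definition dopen (X : Type) (dX : X -> X -> R) : set (set X) :=
  [set A | forall x, A x -> exists e : R, 0 < e /\ [set y | dX x y < e] `<=` A].

Definition borel_for d (X : measurableType d) (dX : X -> X -> R) : Prop :=
  forall A : set X, measurable A <-> <<s dopen dX >> A.

Definition dcompact (X : Type) (dX : X -> X -> R) : Prop :=
  forall u : nat -> X, exists (phi : nat -> nat) (x : X),
    (forall n, (phi n < phi n.+1)%N) /\
    forall e : R, 0 < e -> exists N, forall n, (N <= n)%N -> dX (u (phi n)) x < e.

Definition dcontinuous (X : Type) (dX : X -> X -> R) (T : X -> X) : Prop :=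
  forall x (e : R), 0 < e -> exists delta : R, 0 < delta /\
    forall x', dX x x' < delta -> dX (T x) (T x') < e.

Definition full_support (X : Type) (dX : X -> X -> R) (mu : set X -> \bar R) : Prop :=
  forall x (r : R), 0 < r -> (0 < mu [set y | (dX x y < r)%R])%E.

Definition preserves d1 d2 (X1 : measurableType d1) (X2 : measurableType d2)
  (mu : set X1 -> \bar R) (nu : set X2 -> \bar R) (f : X1 -> X2) : Prop :=
  measurable_fun setT f /\ forall A, measurable A -> mu (f @^-1` A) = nu A.

Definition ms_iso d1 d2 (X1 : measurableType d1) (X2 : measurableType d2)
  (mu : set X1 -> \bar R) (nu : set X2 -> \bar R) (U : X1 -> X2) : Prop :=
  preserves mu nu U /\
  exists V : X2 -> X1, preserves nu mu V /\
    {ae mu, forall x, V (U x) = x} /\ {ae nu, forall y, U (V y) = y}.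

Definition cmmps d (X : measurableType d) (dX : X -> X -> R)
  (mu : probability X R) (T : X -> X) : Prop :=
  [/\ is_metric dX, borel_for dX, dcompact dX, preserves mu mu T &
      (dcontinuous dX T /\ full_support dX mu)].

Definition joining d1 d2 (X : measurableType d1) (Y : measurableType d2)
  (mu : probability X R) (T : X -> X) (nu : probability Y R) (S : Y -> Y)
  (lam : probability (X * Y)%type R) : Prop :=
  [/\ forall A, measurable A -> lam (A `*` setT) = mu A,
      forall B, measurable B -> lam (setT `*` B) = nu B &
      preserves lam lam (fun z => (T z.1, S z.2))].

(* marks and kernels of the marked colored kernel space K_lambda *)
Definition markX d1 (X : measurableType d1) (Y : Type) (dX : X -> X -> R)
  (T : X -> X) (a b : nat) (z : X * Y) : R :=
  dX (iter a T z.1) (iter b T z.1).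
Definition markY (X : Type) d2 (Y : measurableType d2) (dY : Y -> Y -> R)
  (S : Y -> Y) (a b : nat) (z : X * Y) : R :=
  dY (iter a S z.2) (iter b S z.2).
Definition kerX d1 (X : measurableType d1) (Y : Type) (dX : X -> X -> R)
  (T : X -> X) (a b : nat) (z z' : X * Y) : R :=
  dX (iter a T z.1) (iter b T z'.1).
Definition kerY (X : Type) d2 (Y : measurableType d2) (dY : Y -> Y -> R)
  (S : Y -> Y) (a b : nat) (z z' : X * Y) : R :=
  dY (iter a S z.2) (iter b S z'.2).

Definition kernel_preserving_iso d1 d2 (X : measurableType d1) (Y : measurableType d2)
  (dX : X -> X -> R) (T : X -> X) (dY : Y -> Y -> R) (S : Y -> Y)
  (lam lam' : probability (X * Y)%type R) (U : X * Y -> X * Y) : Prop :=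
  ms_iso lam lam' U /\
  (forall a b : nat,
     {ae lam, forall z, markX dX T a b z = markX dX T a b (U z)} /\
     {ae lam, forall z, markY dY S a b z = markY dY S a b (U z)} /\
     {ae (lam \x lam)%E, forall zz : (X * Y) * (X * Y),
        kerX dX T a b zz.1 zz.2 = kerX dX T a b (U zz.1) (U zz.2)} /\
     {ae (lam \x lam)%E, forall zz : (X * Y) * (X * Y),
        kerY dY S a b zz.1 zz.2 = kerY dY S a b (U zz.1) (U zz.2)}).

Definition Aut_md d (X : measurableType d) (dX : X -> X -> R)
  (mu : probability X R) (T : X -> X) (A : X -> X) : Prop :=
  [/\ ms_iso mu mu A,
      {ae mu, forall x, A (T x) = T (A x)} &
      {ae (mu \x mu)%E, forall p : X * X, dX (A p.1) (A p.2) = dX p.1 p.2}].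

End Defs.

(* Main.v *)
Require Import Defs.
From HB Require Import structures.
From mathcomp Require Import all_boot all_order all_algebra.
From mathcomp Require Import all_classical all_reals all_analysis.
From mathcomp Require Import lra zify.
Import Order.TTheory GRing.Theory Num.Theory.
Local Open Scope classical_set_scope.
Local Open Scope ring_scope.

Lemma natinv {R : realType} {e : R} : 0 < e -> exists k : nat, k.+1%:R^-1 < e.
Proof.
move=> e0; have [N _ h] := near_infty_natSinv_lt (PosNum e0).
by exists N; apply: h => /=.
Qed.

Lemma ae_prod_sec {R : realType} {d} {Z : measurableType d} {lam : probability Z R}
  {P : Z * Z -> Prop} : {ae (lam \x lam)%E, forall zz, P zz} ->
  {ae lam, forall z, {ae lam, forall z', P (z, z')}}.
Proof.
case=> N [mN N0 sub].
have mf := measurable_fun_xsection lam mN.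
have : (\int[lam]_x `|(lam \o xsection N) x| = 0)%E.
  rewrite -N0 /product_measure1; apply: eq_integral => x _ /=.
  by rewrite gee0_abs.
move/(ae_eq_integral_abs lam measurableT mf).
apply: filterS => z /(_ I) /= h.
exists (xsection N z); split => //; first exact: measurable_xsection.
move=> z' /= nP; rewrite /xsection /= inE; exact: sub.
Qed.

Lemma aeI {R : realType} {d} {Z : measurableType d} {lam : probability Z R}
  {P Q : Z -> Prop} : {ae lam, forall z, P z} -> {ae lam, forall z, Q z} ->
  {ae lam, forall z, P z /\ Q z}.
Proof. by apply: filterS2 => z a b; split. Qed.

Lemma ae_meas_eq {R : realType} {d} {Z : measurableType d} {lam : probability Z R}
  {P Q : set Z} : measurable P -> measurable Q ->
  {ae lam, forall z, P z <-> Q z} -> lam P = lam Q.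
Proof.
move=> mP mQ [N [mN N0 sub]].
have H (A B : set Z) : measurable A -> measurable B ->
    (forall z, ~ N z -> A z -> B z) -> (lam A <= lam B)%E.
  move=> mA mB AB.
  apply: (@le_trans _ _ (lam (B `|` N))).
    apply: le_measure; rewrite ?inE //; first exact: measurableU.
    move=> z Az; have [Nz|nNz] := pselect (N z); first by right.
    by left; apply: AB.
  apply: le_trans (measureU2 lam mB mN) _.
  have h : forall x : \bar R, x = 0%E -> (lam B + x <= lam B)%E.
    by move=> x ->; rewrite adde0.
  by apply: h; exact: N0.
apply/eqP; rewrite eq_le; apply/andP; split; apply: H => // z nN.
- move=> Pz; have : ~ (~` [set z | P z <-> Q z]) z by move/sub.
  by move=> /contrapT /= [h _]; apply: h.
- move=> Qz; have : ~ (~` [set z | P z <-> Q z]) z by move/sub.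
  by move=> /contrapT /= [_ h]; apply: h.
Qed.

Section Side.
Variables (R : realType) (d : measure_display) (X : measurableType d)
  (dX : X -> X -> R) (mu : probability X R) (T : X -> X)
  (dz : measure_display) (Z : measurableType dz) (lam : probability Z R)
  (p q : Z -> X).
Hypotheses (met : is_metric dX) (bor : borel_for dX) (cpt : dcompact dX)
  (Tc : dcontinuous dX T) (fs : full_support dX mu)
  (mp : measurable_fun setT p) (mq : measurable_fun setT q)
  (pm : forall E, measurable E -> lam (p @^-1` E) = mu E)
  (qm : forall E, measurable E -> lam (q @^-1` E) = mu E)
  (K0 : {ae (lam \x lam)%E, forall zz : Z * Z,
          dX (p zz.1) (p zz.2) = dX (q zz.1) (q zz.2)})
  (K1 : {ae (lam \x lam)%E, forall zz : Z * Z,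
          dX (T (p zz.1)) (p zz.2) = dX (T (q zz.1)) (q zz.2)}).

Let d0 x : dX x x = 0.
Proof. by case: met => h _ _; apply/h. Qed.
Let dsym x y : dX x y = dX y x.
Proof. by case: met. Qed.
Let dtri x y z : dX x z <= dX x y + dX y z.
Proof. by case: met. Qed.
Let dge0 x y : 0 <= dX x y.
Proof. have := dtri x y x; rewrite d0 (dsym y x); lra. Qed.
Let dle0 x y : dX x y <= 0 -> x = y.
Proof.
move=> h; case: met => H _ _; apply/H; apply/eqP; rewrite eq_le h dge0 //.
Qed.

Let ball_meas x r : measurable [set y | (dX x y < r)%R].
Proof.
apply/bor; apply: sub_sigma_algebra => y /= hy.
exists (r - dX x y); split; first by rewrite subr_gt0.
by move=> w /= hw; have := dtri x y w; lra.
Qed.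

Let dense {f : Z -> X} (mf : measurable_fun setT f)
  (fm : forall E, measurable E -> lam (f @^-1` E) = mu E)
  {P : Z -> Prop} : {ae lam, forall z, P z} ->
  forall x r, 0 < r -> exists z, P z /\ dX x (f z) < r.
Proof.
case=> N [mN N0 sub] x r r0.
apply: contrapT => hn.
have : (mu [set y | (dX x y < r)%R] <= 0)%E.
  rewrite -(fm _ (ball_meas x r)).
  have h : forall v : \bar R, v = 0%E -> (lam (f @^-1` [set y | (dX x y < r)%R]) <= v)%E ->
     (lam (f @^-1` [set y | (dX x y < r)%R]) <= 0)%E by move=> v ->.
  apply: (h (lam N)); first exact: N0.
  apply: le_measure; rewrite ?inE //.
  - by rewrite -[_ @^-1` _]setTI; apply: mf => //; exact: ball_meas.
  - move=> z /= hz; apply: sub => /= Pz; apply: hn; exists z; split => //.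
by rewrite leNgt (fs x r r0).
Qed.

Let approx {f : Z -> X} (g : Z -> X) (mf : measurable_fun setT f)
  (fm : forall E, measurable E -> lam (f @^-1` E) = mu E)
  {P : Z -> Prop} : {ae lam, forall z, P z} -> forall x,
  exists y, forall e, 0 < e -> exists z, [/\ P z, dX x (f z) < e & dX y (g z) < e].
Proof.
move=> aP x.
have hz (n : nat) : exists z, P z /\ dX x (f z) < n.+1%:R^-1.
  by apply: (dense mf fm aP); rewrite invr_gt0 ltr0Sn.
have [zs hzs] := choice hz.
have [phi [y [phim conv]]] := cpt (fun n => g (zs n)).
exists y => e e0.
have [k hk] := natinv e0.
have [N hN] := conv e e0.
have phige m : (m <= phi m)%N.
  elim: m => // m ih; have := phim m; lia.
pose n := maxn N k.
exists (zs (phi n)); split.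
- by case: (hzs (phi n)).
- case: (hzs (phi n)) => _ h; apply: (lt_le_trans h); apply: le_trans (ltW hk).
  rewrite lef_pV2 ?posrE ?ltr0Sn // ler_nat ltnS.
  by apply: leq_trans (phige n); rewrite /n leq_maxr.
- by rewrite dsym; apply: hN; rewrite /n leq_maxl.
Qed.

Definition Good z :=
  {ae lam, forall z', dX (p z) (p z') = dX (q z) (q z')} /\
  {ae lam, forall z', dX (T (p z)) (p z') = dX (T (q z)) (q z')}.

Let aeGood : {ae lam, forall z, Good z}.
Proof. exact: (aeI (ae_prod_sec K0) (ae_prod_sec K1)). Qed.

Let iso0 {z1 z2} : Good z1 -> Good z2 -> dX (q z1) (q z2) = dX (p z1) (p z2).
Proof.
move=> [g1 _] [g2 _].
have key e : 0 < e -> exists z, (dX (p z1) (p z) = dX (q z1) (q z) /\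
     dX (p z2) (p z) = dX (q z2) (q z)) /\ dX (p z2) (p z) < e.
  by move=> e0; apply: (dense mp pm (aeI g1 g2)).
apply/eqP; rewrite eq_le; apply/andP; split; apply/ler_addgt0Pr => e e0;
  (have [z [[h1 h2] h3]] : exists z, (dX (p z1) (p z) = dX (q z1) (q z) /\
     dX (p z2) (p z) = dX (q z2) (q z)) /\ dX (p z2) (p z) < e / 2
   by apply: key; rewrite divr_gt0);
  have := dtri (q z1) (q z) (q z2); have := dsym (q z) (q z2);
  have := dtri (p z1) (p z2) (p z); have := dtri (p z1) (p z) (p z2);
  have := dsym (p z) (p z2); have := dtri (q z1) (q z2) (q z); lra.
Qed.

Definition Ch x y := forall z, Good z -> dX y (q z) = dX x (p z).

Let Ch_ex x : exists y, Ch x y.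
Proof.
have [y hy] := approx q mp pm aeGood x.
exists y => z0 gz0.
apply/eqP; rewrite eq_le; apply/andP; split; apply/ler_addgt0Pr => e e0;
  (have [z [gz h1 h2]] := hy (e / 2) ltac:(by rewrite divr_gt0));
  have := iso0 gz gz0;
  have := dtri y (q z) (q z0); have := dtri (p z) x (p z0);
  have := dsym (p z) x; have := dtri x (p z) (p z0);
  have := dtri (q z) y (q z0); have := dsym (q z) y; lra.
Qed.

Let Ch_uniq {x y y'} : Ch x y -> Ch x y' -> y = y'.
Proof.
move=> h h'; apply: dle0; apply/ler_addgt0Pr => e e0; rewrite add0r.
have [z [gz hz]] := dense mp pm aeGood x (e / 2) ltac:(by rewrite divr_gt0).
have := h z gz; have := h' z gz; have := dtri y (q z) y'; have := dsym (q z) y'.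
lra.
Qed.

Definition Amap x := sval (cid (Ch_ex x)).
Let AP x : Ch x (Amap x). Proof. exact: svalP. Qed.

Let A_good {z} : Good z -> Amap (p z) = q z.
Proof.
move=> gz; apply: (Ch_uniq (AP (p z))) => z' gz'.
by rewrite iso0.
Qed.

Let A_iso x x' : dX (Amap x) (Amap x') = dX x x'.
Proof.
apply/eqP; rewrite eq_le; apply/andP; split; apply/ler_addgt0Pr => e e0;
  (have [z [gz hz]] := dense mp pm aeGood x (e / 2) ltac:(by rewrite divr_gt0));
  have := AP x z gz; have := AP x' z gz;
  have := dtri (Amap x) (q z) (Amap x'); have := dsym (q z) (Amap x');
  have := dtri x' x (p z); have := dsym x' x;
  have := dtri x (p z) x'; have := dsym (p z) x';
  have := dtri (Amap x') (Amap x) (q z); have := dsym (Amap x') (Amap x); lra.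
Qed.

Let A_inj x x' : Amap x = Amap x' -> x = x'.
Proof. by move=> h; apply: dle0; rewrite -A_iso h d0. Qed.

Let A_surj y : exists x, Amap x = y.
Proof.
have [x hx] := approx p mq qm aeGood y.
exists x; apply: dle0; apply/ler_addgt0Pr => e e0; rewrite add0r.
have [z [gz h1 h2]] := hx (e / 2) ltac:(by rewrite divr_gt0).
have := dtri (Amap x) (Amap (p z)) y; rewrite A_iso (A_good gz).
have := dsym (q z) y; lra.
Qed.

Definition Ainv y := sval (cid (A_surj y)).
Let AinvK y : Amap (Ainv y) = y. Proof. exact: svalP (cid (A_surj y)). Qed.
Let AKinv x : Ainv (Amap x) = x. Proof. by apply: A_inj; rewrite AinvK. Qed.
Let Ainv_iso y y' : dX (Ainv y) (Ainv y') = dX y y'.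
Proof. by rewrite -A_iso !AinvK. Qed.

Let iso_meas (f : X -> X) : (forall x x', dX (f x) (f x') = dX x x') ->
  measurable_fun setT f.
Proof.
move=> fi; apply: (measurability (dopen dX)).
  by apply/funext => E; apply/propext; exact: bor.
move=> _ [B oB <-]; rewrite setTI; apply/bor; apply: sub_sigma_algebra.
move=> x /= Bfx; have [e [e0 he]] := oB _ Bfx.
by exists e; split => // y /= hy; apply: he => /=; rewrite fi.
Qed.

Let AT_good {z} : Good z -> Amap (T (p z)) = T (q z).
Proof.
move=> [_ g1]; apply: dle0; apply/ler_addgt0Pr => e e0; rewrite add0r.
have [z' [[h gz'] hz']] := dense mp pm (aeI g1 aeGood) (T (p z)) (e / 2)
  ltac:(by rewrite divr_gt0).
have := dtri (Amap (T (p z))) (q z') (T (q z)).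
rewrite -(A_good gz') A_iso (A_good gz') (dsym (q z')) -h; lra.
Qed.

Let AT x : Amap (T x) = T (Amap x).
Proof.
apply: dle0; apply/ler_addgt0Pr => e e0; rewrite add0r.
have e2 : 0 < e / 2 by rewrite divr_gt0.
have [d1 [d10 hd1]] := Tc x (e / 2) e2.
have [d2 [d20 hd2]] := Tc (Amap x) (e / 2) e2.
have dm : 0 < Num.min d1 d2 by rewrite lt_min d10 d20.
have [z [gz hz]] := dense mp pm aeGood x _ dm.
move: hz; rewrite lt_min => /andP [l1 l2].
have t1 := hd1 _ l1.
have : dX (Amap x) (Amap (p z)) < d2 by rewrite A_iso.
move=> /hd2; rewrite (A_good gz) => t2.
have := dtri (Amap (T x)) (Amap (T (p z))) (T (Amap x)).
rewrite A_iso (AT_good gz) (dsym (T (q z))); lra.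
Qed.

Let A_pres E : measurable E -> mu (Amap @^-1` E) = mu E.
Proof.
move=> mE.
have mA := iso_meas Amap A_iso.
have mAE : measurable (Amap @^-1` E) by rewrite -[_ @^-1` _]setTI; exact: mA.
rewrite -(pm _ mAE) -(qm _ mE); apply: ae_meas_eq.
- by rewrite -[_ @^-1` _]setTI; exact: mp.
- by rewrite -[_ @^-1` _]setTI; exact: mq.
- by apply: filterS aeGood => z gz /=; rewrite (A_good gz).
Qed.

Lemma side_main : exists A, Aut_md dX mu T A /\ {ae lam, forall z, q z = A (p z)}.
Proof.
exists Amap; split; last first.
  by apply: filterS aeGood => z gz; rewrite A_good.
split; last 2 first.
- exact: aeW.
- exact: aeW.
split; first by split; [exact: iso_meas Amap A_iso | exact: A_pres].
exists Ainv; split; last by split; apply: aeW.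
have mI := iso_meas Ainv Ainv_iso.
split => // E mE.
have mIE : measurable (Ainv @^-1` E) by rewrite -[_ @^-1` _]setTI; exact: mI.
rewrite -(A_pres _ mIE); congr (mu _).
by apply/funext => x /=; rewrite /preimage /= AKinv.
Qed.

End Side.

Theorem theorem10 (R : realType)
  (d1 d2 : measure_display)
  (X : measurableType d1) (dX : X -> X -> R) (mu : probability X R) (T : X -> X)
  (Y : measurableType d2) (dY : Y -> Y -> R) (nu : probability Y R) (S : Y -> Y)
  (lam lam' : probability (X * Y)%type R) (U : X * Y -> X * Y) :
  cmmps dX mu T -> cmmps dY nu S ->
  joining mu T nu S lam -> joining mu T nu S lam' ->
  kernel_preserving_iso dX T dY S lam lam' U ->
  exists (A : X -> X) (B : Y -> Y),
    [/\ Aut_md dX mu T A, Aut_md dY nu S B,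
        {ae lam, forall z, U z = (A z.1, B z.2)} &
        forall E, measurable E -> lam' E = lam ((fun z => (A z.1, B z.2)) @^-1` E)].
Proof.
move=> [metX borX cptX _ [TcX fsX]] [metY borY cptY _ [ScY fsY]]
  [j1 j2 _] [j1' j2' _] [[[mU Upres] _] kp].
have mq1 : measurable_fun setT (fun z => (U z).1) :=
  measurableT_comp measurable_fst mU.
have mq2 : measurable_fun setT (fun z => (U z).2) :=
  measurableT_comp measurable_snd mU.
have pm1 E : measurable E -> lam (fst @^-1` E) = mu E.
  by move=> mE; rewrite -setXT j1.
have qm1 E : measurable E -> lam ((fun z => (U z).1) @^-1` E) = mu E.
  move=> mE; have -> : (fun z => (U z).1) @^-1` E = U @^-1` (E `*` setT).
    by rewrite setXT.
  by rewrite Upres ?j1' //; exact: measurableX.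
have pm2 E : measurable E -> lam (snd @^-1` E) = nu E.
  by move=> mE; rewrite -setTX j2.
have qm2 E : measurable E -> lam ((fun z => (U z).2) @^-1` E) = nu E.
  move=> mE; have -> : (fun z => (U z).2) @^-1` E = U @^-1` (setT `*` E).
    by rewrite setTX.
  by rewrite Upres ?j2' //; exact: measurableX.
have K0X : {ae (lam \x lam)%E, forall zz : (X * Y) * (X * Y),
   dX (fst zz.1) (fst zz.2) = dX ((U zz.1).1) ((U zz.2).1)}.
  by apply: filterS ((kp 0 0).2.2.1) => zz; rewrite /kerX /=.
have K1X : {ae (lam \x lam)%E, forall zz : (X * Y) * (X * Y),
   dX (T (fst zz.1)) (fst zz.2) = dX (T ((U zz.1).1)) ((U zz.2).1)}.
  by apply: filterS ((kp 1 0).2.2.1) => zz; rewrite /kerX /=.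
have K0Y : {ae (lam \x lam)%E, forall zz : (X * Y) * (X * Y),
   dY (snd zz.1) (snd zz.2) = dY ((U zz.1).2) ((U zz.2).2)}.
  by apply: filterS ((kp 0 0).2.2.2) => zz; rewrite /kerY /=.
have K1Y : {ae (lam \x lam)%E, forall zz : (X * Y) * (X * Y),
   dY (S (snd zz.1)) (snd zz.2) = dY (S ((U zz.1).2)) ((U zz.2).2)}.
  by apply: filterS ((kp 1 0).2.2.2) => zz; rewrite /kerY /=.
have [A [autA hA]] := @side_main _ _ _ _ _ _ _ _ _ fst (fun z => (U z).1) metX borX cptX TcX fsX measurable_fst mq1
  pm1 qm1 K0X K1X.
have [B [autB hB]] := @side_main _ _ _ _ _ _ _ _ _ snd (fun z => (U z).2) metY borY cptY ScY fsY measurable_snd mq2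
  pm2 qm2 K0Y K1Y.
have hU : {ae lam, forall z, U z = (A z.1, B z.2)}.
  apply: filterS2 hA hB => z h1 h2; rewrite -h1 -h2.
  by case: (U z).
exists A, B; split => // E mE.
case: autA => [[[mA _] _] _ _]; case: autB => [[[mB _] _] _ _].
have mW : measurable_fun setT (fun z : X * Y => (A z.1, B z.2)).
  apply: measurable_fun_pair.
  - exact: measurableT_comp mA measurable_fst.
  - exact: measurableT_comp mB measurable_snd.
rewrite -(Upres _ mE); apply: ae_meas_eq.
- by rewrite -[_ @^-1` _]setTI; exact: mU.
- by rewrite -[_ @^-1` _]setTI; exact: mW.
- by apply: filterS hU => z /= ->.
Qed.
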